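(* In the setting of the context, for $1\le i\le 2n$ let $A_1(i,c)$ be the area of the polygon with vertices $P_i,P_{i+1},\dots,P_{i+n}$ and $A_2(i,c)$ the area of the polygon with vertices $P_{i+n},P_{i+n+1},\dots,P_{i}$ (the two parts into which the diagonal $P_iP_{i+n}$ cuts $P$). Then $$A_1(i,c)-A_2(i,c)=4c\beta_i,\qquad 1\le i\le 2n.$$
   Context: $[x,y]$ denotes the determinant of the matrix with columns $x,y\in\mathbb{R}^2$. Fix $n\ge2$; indices (integer and half-integer) are read modulo $2n$. $U$ is a convex $2n$-gon with distinct vertices $U_1,\dots,U_{2n}$ in counterclockwise order with $U_{i+n}=-U_i$. Let $c>0$ and let $P$ be a convex polygon with nonempty interior and vertex list $P_1,\dots,P_{2n}$ (listed counterclockwise, consecutive entries may coincide) with $P_{i+1}-P_i$ a nonnegative multiple of $U_{i+1}-U_i$ and $P_i-P_{i+n}=2cU_i$ for all $i$. Let $M_i=\frac12(P_i+P_{i+n})$ (so $P_i=M_i+cU_i$), define $\alpha_{i+\frac12}$ by $M_{i+1}-M_i=\alpha_{i+\frac12}(U_{i+1}-U_i)$, and set $\beta_i=\frac12\sum_{j=i}^{i+n-1}\alpha_{j+\frac12}[U_j,U_{j+1}]$. *)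

(* Defs.v *)
From mathcomp Require Import all_boot all_order all_algebra.
Set Implicit Arguments. Unset Strict Implicit. Unset Printing Implicit Defensive.
Import Order.TTheory GRing.Theory Num.Theory.
Local Open Scope ring_scope.

(* Points of R^2 as pairs; [x,y] is the determinant with columns x,y. *)
Definition pt (R : realFieldType) := (R * R)%type.

Section Plane.
Variable R : realFieldType.
Definition padd (x y : pt R) : pt R := (x.1 + y.1, x.2 + y.2).
Definition psub (x y : pt R) : pt R := (x.1 - y.1, x.2 - y.2).
Definition popp (x : pt R) : pt R := (- x.1, - x.2).
Definition pscale (a : R) (x : pt R) : pt R := (a * x.1, a * x.2).
Definition det2 (x y : pt R) : R := x.1 * y.2 - x.2 * y.1.

(* Shoelace (signed) area of the closed polygon with vertex list s
   (the last vertex is joined back to the first). For a convex polygon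
   listed counterclockwise this is its area. *)
Definition poly_area (s : seq (pt R)) : R :=
  2^-1 * \sum_(k < size s)
     det2 (nth (0, 0) s k) (nth (0, 0) s ((k.+1) %% size s)).

Definition midpt (n : nat) (P : nat -> pt R) (i : nat) : pt R :=
  pscale 2^-1 (padd (P i) (P (i + n)%N)).

(* beta_i = 1/2 sum_{j=i}^{i+n-1} alpha_{j+1/2} [U_j, U_{j+1}],
   where alpha j stands for alpha_{j+1/2}. *)
Definition beta (n : nat) (U : nat -> pt R) (alpha : nat -> R) (i : nat) : R :=
  2^-1 * \sum_(i <= j < i + n) alpha j * det2 (U j) (U j.+1).

Definition vlist (P : nat -> pt R) (a m : nat) : seq (pt R) :=
  [seq P k | k <- iota a m.+1].
End Plane.

(* Main.v *)
Require Import Defs.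
From mathcomp Require Import all_boot all_order all_algebra ring lra.
Import Order.TTheory GRing.Theory Num.Theory.
Local Open Scope ring_scope.

Lemma key (R : realFieldType) (Pk Pk1 Pkn Pk1n Uk Uk1 : pt R) (c a : R) :
  psub Pk Pkn = pscale (2 * c) Uk -> psub Pk1 Pk1n = pscale (2 * c) Uk1 ->
  psub (pscale 2^-1 (padd Pk1 Pk1n)) (pscale 2^-1 (padd Pk Pkn)) = pscale a (psub Uk1 Uk) ->
  det2 Pk Pk1 - det2 Pkn Pk1n = 2 * c * (det2 Pk1 Uk1 - det2 Pk Uk) + 4 * c * a * det2 Uk Uk1.
Proof.
move: Pk Pk1 Pkn Pk1n Uk Uk1 => [p1 p2] [q1 q2] [r1 r2] [s1 s2] [u1 u2] [v1 v2].
rewrite /psub /pscale /padd /det2 /=; case=> h1 h2 [h3 h4] [h5 h6].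
have er1 : r1 = p1 - 2 * c * u1 by rewrite -h1; ring.
have er2 : r2 = p2 - 2 * c * u2 by rewrite -h2; ring.
have es1 : s1 = q1 - 2 * c * v1 by rewrite -h3; ring.
have es2 : s2 = q2 - 2 * c * v2 by rewrite -h4; ring.
have eq1 : q1 = p1 + c * v1 - c * u1 + a * (v1 - u1).
  by rewrite -h5 er1 es1; field; lra.
have eq2 : q2 = p2 + c * v2 - c * u2 + a * (v2 - u2).
  by rewrite -h6 er2 es2; field; lra.
rewrite er1 er2 es1 es2 eq1 eq2; ring.
Qed.

Lemma area_eq (R : realFieldType) (P : nat -> pt R) (a n : nat) :
  poly_area (vlist P a n) =
  2^-1 * (\sum_(k < n) det2 (P (a + k)%N) (P (a + k).+1) + det2 (P (a + n)%N) (P a)).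
Proof.
rewrite /poly_area /vlist size_map size_iota big_ord_recr.
congr (_ * (_ + _)).
  apply: eq_bigr => k _.
  have hk : (k < n.+1)%N by apply: ltnW; rewrite ltnS.
  have hk1 : (k.+1 < n.+1)%N by rewrite ltnS.
  rewrite (nth_map 0%N) ?size_iota // nth_iota //.
  by rewrite modn_small // (nth_map 0%N) ?size_iota // nth_iota // addnS.
rewrite modnn (nth_map 0%N) ?size_iota // nth_iota //.
Qed.

Lemma tele (R : realFieldType) (f : nat -> R) (i m : nat) :
  \sum_(k < m) (f (i + k).+1 - f (i + k)%N) = f (i + m)%N - f i.
Proof.
elim: m => [|m IH]; first by rewrite big_ord0 addn0 subrr.
rewrite big_ord_recr /= IH addnS; ring.
Qed.

Lemma aux1 (R : realFieldType) (p q u : pt R) (c : R) :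
  psub p q = pscale (2 * c) u -> det2 q (popp u) = - det2 p u.
Proof.
move: p q u => [p1 p2] [q1 q2] [u1 u2]; rewrite /psub /pscale /det2 /popp /=.
case=> h1 h2.
have -> : q1 = p1 - 2 * c * u1 by rewrite -h1; ring.
have -> : q2 = p2 - 2 * c * u2 by rewrite -h2; ring.
ring.
Qed.

Lemma aux2 (R : realFieldType) (p q u : pt R) (c : R) :
  psub p q = pscale (2 * c) u -> det2 q p - det2 p q = 4 * c * det2 p u.
Proof.
move: p q u => [p1 p2] [q1 q2] [u1 u2]; rewrite /psub /pscale /det2 /popp /=.
case=> h1 h2.
have -> : q1 = p1 - 2 * c * u1 by rewrite -h1; ring.
have -> : q2 = p2 - 2 * c * u2 by rewrite -h2; ring.
ring.
Qed.

Theorem proposition3p4 (R : realFieldType) (n : nat) (U P : nat -> pt R)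
    (c : R) (alpha : nat -> R) :
  (2 <= n)%N ->
  (* U: indices mod 2n, centrally symmetric *)
  (forall i, U (i + 2 * n)%N = U i) ->
  (forall i, U (i + n)%N = popp (U i)) ->
  (* distinct vertices *)
  (forall i j, (i < j < 2 * n)%N -> U i != U j) ->
  (* convex polygon, counterclockwise: every other vertex strictly left of each edge *)
  (forall i k, (1 < k < 2 * n)%N ->
     0 < det2 (psub (U i.+1) (U i)) (psub (U (i + k)%N) (U i))) ->
  0 < c ->
  (* P: indices mod 2n, convex, counterclockwise, nonempty interior *)
  (forall i, P (i + 2 * n)%N = P i) ->
  (forall i k, 0 <= det2 (psub (P i.+1) (P i)) (psub (P (i + k)%N) (P i))) ->
  (exists i j k, det2 (psub (P j) (P i)) (psub (P k) (P i)) != 0) ->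
  (forall i, exists t, 0 <= t /\ psub (P i.+1) (P i) = pscale t (psub (U i.+1) (U i))) ->
  (forall i, psub (P i) (P (i + n)%N) = pscale (2 * c) (U i)) ->
  (* alpha j = alpha_{j+1/2} *)
  (forall i, psub (midpt n P i.+1) (midpt n P i) = pscale (alpha i) (psub (U i.+1) (U i))) ->
  forall i, (1 <= i <= 2 * n)%N ->
    poly_area (vlist P i n) - poly_area (vlist P (i + n) n) = 4 * c * beta n U alpha i.
Proof.
move=> _ _ hUn _ _ _ hP2 _ _ _ hPn hM i _.
rewrite !area_eq /beta.
pose g k := det2 (P k) (U k).
have hD : forall k, det2 (P k) (P k.+1) - det2 (P (k + n)%N) (P (k + n).+1)
   = 2 * c * (g k.+1 - g k) + 4 * c * alpha k * det2 (U k) (U k.+1).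
  by move=> k; rewrite -addSn; apply: key; [exact: hPn | exact: hPn | exact: hM].
have e1 : \sum_(k < n) det2 (P (i + n + k)%N) (P (i + n + k).+1)
   = \sum_(k < n) det2 (P (i + k + n)%N) (P (i + k + n).+1).
  by apply: eq_bigr => k _; rewrite addnAC.
have e2 : P (i + n + n)%N = P i by rewrite -addnA addnn -mul2n hP2.
have e3 : \sum_(i <= j < i + n) alpha j * det2 (U j) (U j.+1)
   = \sum_(k < n) alpha (i + k)%N * det2 (U (i + k)%N) (U (i + k).+1).
  by rewrite -{1}[i]add0n big_addn addKn big_mkord; apply: eq_bigr => k _; rewrite addnC.
have hS : \sum_(k < n) det2 (P (i + k)%N) (P (i + k).+1)
   - \sum_(k < n) det2 (P (i + k + n)%N) (P (i + k + n).+1)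
   = 2 * c * (g (i + n)%N - g i)
     + 4 * c * \sum_(k < n) alpha (i + k)%N * det2 (U (i + k)%N) (U (i + k).+1).
  rewrite -sumrB; under eq_bigr => k _ do rewrite hD.
  rewrite big_split /=.
  rewrite -mulr_sumr tele mulr_sumr; congr (_ + _).
  by apply: eq_bigr => k _; rewrite mulrA.
have hg : g (i + n)%N = - g i by rewrite /g hUn; apply: aux1; exact: hPn.
have hX : det2 (P (i + n)%N) (P i) - det2 (P i) (P (i + n)%N) = 4 * c * g i.
  by apply: aux2; exact: hPn.
rewrite e1 e2 e3.
move: hS hX; rewrite hg.
set S1 := \sum_(k < n) _.
set S2 := \sum_(k < n) _.
set S3 := \sum_(k < n) _.
move=> hS hX.
have -> : 2^-1 * (S1 + det2 (P (i + n)%N) (P i)) - 2^-1 * (S2 + det2 (P i) (P (i + n)%N))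
   = 2^-1 * ((S1 - S2) + (det2 (P (i + n)%N) (P i) - det2 (P i) (P (i + n)%N))) by ring.
rewrite hS hX; ring.
Qed.
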